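(* Let $p$ and $\ell$ be arbitrary positive integers and let $\varepsilon\in(0,1)$. There exist a finite metric space $(\mathcal{X},d)$, an initial forest on it with $\gamma(\mathcal{P})=1$, and a choice of sets $R_i\subseteq P_i$ with $|R_i|=\ell$ for every component, such that the spanning tree returned by $\textsf{MultiRepMFC}(R)$ has weight exactly $$\frac{(2+\ell\varepsilon-\varepsilon)p-1}{(1+\varepsilon\ell)p-\varepsilon}$$ times the weight of an optimal solution of the Metric Forest Completion problem (which for this instance is also a minimum spanning tree of $G_{\mathcal{X}}$).
   Context: For a finite metric space $(\mathcal{X},d)$, $G_{\mathcal{X}}$ is the complete graph on $\mathcal{X}$ with edge weights $d$, and the weight of an edge set is the sum of its edge weights. For $A,B\subseteq\mathcal{X}$, $d(A,B)=\min_{a\in A,b\in B}d(a,b)$. An initial forest consists of a partition $\mathcal{P}=\{P_1,\dots,P_t\}$ of $\mathcal{X}$ and a spanning tree $T_i$ of the complete graph on each $P_i$; $E_t$ is the union of their edge sets. The Metric Forest Completion (MFC) problem: find a minimum-weight spanning tree of $G_{\mathcal{X}}$ containing $E_t$. Overlap parameter: with $\mathcal{T}_{\mathcal{X}}$ the set of minimum spanning trees of $G_{\mathcal{X}}$ and $T(\mathcal{P})$ the edges of $T$ with both endpoints in the same part, $\gamma(\mathcal{P})=w(E_t)/\max_{T\in\mathcal{T}_{\mathcal{X}}}w(T(\mathcal{P}))$. Algorithm $\textsf{MultiRepMFC}(R)$, for nonempty $R_i\subseteq P_i$: for each pair $i\ne j$ set $\hat w(v_i,v_j)=\min\{d(P_i,R_j),d(P_j,R_i)\}$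 and record a point pair attaining it; compute a minimum spanning tree of the complete graph on $v_1,\dots,v_t$ with weights $\hat w$; return $E_t$ together with the recorded point pairs of the edges of this tree. *)

(* Defs.v *)
From mathcomp Require Import all_boot all_order all_algebra.
Set Implicit Arguments. Unset Strict Implicit. Unset Printing Implicit Defensive.
Import Order.TTheory GRing.Theory Num.Theory.
Local Open Scope ring_scope.

Section Graphs.
Variable R : realFieldType.
Variable V : finType.

(* Undirected (simple) graphs on V: an edge is a 2-element subset of V. *)
Definition adj (E : {set {set V}}) : rel V :=
  fun x y => (x != y) && ([set x; y] \in E).

(* E is (the edge set of) a spanning tree of the complete graph on S:
   its edges are 2-subsets of S, it connects all of S, and it is acyclic
   (every edge is a bridge: removing it disconnects its endpoints). *)
Definition spanning_tree (S : {set V}) (E : {set {set V}}) : bool :=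
  [&& [forall e in E, (#|e| == 2) && (e \subset S)],
      [forall x in S, forall y in S, connect (adj E) x y] &
      [forall e in E, forall x, forall y,
          (e == [set x; y]) ==> ~~ connect (adj (E :\ e)) x y]].

(* weight of an edge e = {x,y} (x <> y) for a symmetric weight f: f x y *)
Definition ewt (f : V -> V -> R) (e : {set V}) : R :=
  (\sum_(x in e) \sum_(y in e | x != y) f x y) / 2.

Definition wt (f : V -> V -> R) (E : {set {set V}}) : R :=
  \sum_(e in E) ewt f e.

End Graphs.

Section MFC.
Variable R : realFieldType.
Variable X : finType.
Variable d : X -> X -> R.

Definition is_metric : Prop :=
  [/\ forall x y, 0 <= d x y,
      forall x y, d x y = 0 <-> x = y,
      forall x y, d x y = d y x &
      forall x y z, d x z <= d x y + d y z].

Definition is_mst (T : {set {set X}}) : bool :=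
  spanning_tree setT T &&
  [forall T' : {set {set X}}, spanning_tree setT T' ==> (wt d T <= wt d T')].

Definition initial_forest (P : {set {set X}}) (Et : {set {set X}}) : Prop :=
  [/\ partition P [set: X],
      forall B, B \in P -> spanning_tree B [set e in Et | e \subset B] &
      forall e, e \in Et -> exists2 B, B \in P & e \subset B].

Definition Tpart (P : {set {set X}}) (T : {set {set X}}) : {set {set X}} :=
  [set e in T | [exists B in P, e \subset B]].

Definition gamma (P : {set {set X}}) (Et : {set {set X}}) : R :=
  wt d Et / \big[Num.max/0]_(T : {set {set X}} | is_mst T) wt d (Tpart P T).

Definition mfc_opt (Et : {set {set X}}) (T : {set {set X}}) : bool :=
  [&& spanning_tree setT T, Et \subset T &
      [forall T' : {set {set X}},
          (spanning_tree setT T' && (Et \subset T')) ==> (wt d T <= wt d T')]].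

Definition is_setdist (A B : {set X}) (r : R) : Prop :=
  (exists a b, [/\ a \in A, b \in B & d a b = r]) /\
  (forall a b, a \in A -> b \in B -> r <= d a b).

(* F is a possible output of MultiRepMFC(Rep): hw is the weight hat-w on the
   component graph (vertices = parts of P), S a minimum spanning tree of the
   complete graph on the parts w.r.t. hw, pr s the recorded point pair of the
   component edge s, and F = Et together with the recorded pairs of S. *)
Definition multirep_output (P : {set {set X}}) (Et : {set {set X}})
    (Rep : {set X} -> {set X}) (F : {set {set X}}) : Prop :=
  exists (hw : {set X} -> {set X} -> R) (S : {set {set {set X}}})
         (pr : {set {set X}} -> {set X}),
  [/\ forall B C, B \in P -> C \in P -> B != C ->
        exists r1 r2, [/\ is_setdist B (Rep C) r1, is_setdist C (Rep B) r2 &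
                          hw B C = Num.min r1 r2],
      spanning_tree P S /\
        (forall S', spanning_tree P S' -> wt hw S <= wt hw S'),
      forall s, s \in S -> forall B C, B != C -> s = [set B; C] ->
        exists x y, [/\ pr s = [set x; y],
                        (x \in B /\ y \in Rep C) \/ (x \in C /\ y \in Rep B) &
                        d x y = hw B C] &
      F = Et :|: [set pr s | s in S]].

End MFC.

(* Main.v *)
Require Import Defs.
From mathcomp Require Import all_boot all_order all_algebra.
From mathcomp.algebra_tactics Require Import ring lra.
From mathcomp.zify Require Import zify.
Import Order.TTheory GRing.Theory Num.Theory.
Local Open Scope ring_scope.
Set Implicit Arguments. Unset Strict Implicit. Unset Printing Implicit Defensive.

Section Gen.
Variable R : realFieldType.
Variable V : finType.

Lemma adj_sym (E : {set {set V}}) : symmetric (adj E).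
Proof. by move=> x y; rewrite /adj eq_sym setUC. Qed.

Lemma cut_lemma (E : {set {set V}}) (K : {set V}) x y :
  connect (adj E) x y -> x \in K -> y \notin K ->
  exists u v, [/\ u \in K, v \notin K, u != v & [set u; v] \in E].
Proof.
move=> c xK yK.
case: (boolP [exists u, exists v, [&& u \in K, v \notin K, u != v & [set u; v] \in E]]).
  by case/existsP=> u /existsP[v /and4P[]] *; exists u, v.
move=> /negP H; exfalso.
have cl : closed (adj E) K.
  move=> a b /andP[ab abE].
  case aK: (a \in K); case bK: (b \in K) => //; exfalso; apply: H.
    by apply/existsP; exists a; apply/existsP; exists b; rewrite aK bK ab abE.
  apply/existsP; exists b; apply/existsP; exists a.
  by rewrite aK bK eq_sym ab setUC abE.
have := closed_connect cl c.
by rewrite xK (negbTE yK).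
Qed.

Lemma set2_inj (a b c d : V) : [set a; b] = [set c; d] ->
  (a = c /\ b = d) \/ (a = d /\ b = c).
Proof.
move=> e.
have ha : a \in [set c; d] by rewrite -e set21.
have hb : b \in [set c; d] by rewrite -e set22.
have hc : c \in [set a; b] by rewrite e set21.
have hd : d \in [set a; b] by rewrite e set22.
move: ha hb hc hd; rewrite !inE.
by do 4 case/orP=> /eqP ?; subst; auto.
Qed.

Lemma ewt_pair (f : V -> V -> R) x y : x != y ->
  ewt f [set x; y] = (f x y + f y x) / 2.
Proof.
move=> xy; rewrite /ewt.
have H a : \sum_(b in [set x; y] | a != b) f a b =
    (if a != x then f a x else 0) + (if a != y then f a y else 0).
  rewrite big_mkcondr /= (@big_setU1 _ _ _ _ x [set y]) ?inE //=.
  by rewrite big_set1.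
rewrite (@big_setU1 _ _ _ _ x [set y]) ?inE //= big_set1 !H.
by rewrite eqxx (negbTE xy) eq_sym (negbTE xy) eqxx !addr0 add0r.
Qed.

Lemma ewt_ge0 (f : V -> V -> R) e : (forall x y, 0 <= f x y) -> 0 <= ewt f e.
Proof.
move=> f0; rewrite /ewt divr_ge0 // sumr_ge0 // => x _.
exact: sumr_ge0.
Qed.

Lemma wt_ge0 (f : V -> V -> R) (E : {set {set V}}) : (forall x y, 0 <= f x y) -> 0 <= wt f E.
Proof. by move=> f0; rewrite /wt sumr_ge0 // => e _; apply: ewt_ge0. Qed.

Lemma wt_sub (f : V -> V -> R) (E1 E2 : {set {set V}}) : (forall x y, 0 <= f x y) ->
  E1 \subset E2 -> wt f E1 <= wt f E2.
Proof.
move=> f0 sE; rewrite /wt [X in _ <= X](big_setID E1) /= (setIidPr sE).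
by rewrite lerDl sumr_ge0 // => e _; apply: ewt_ge0.
Qed.

Lemma wt_split (f : V -> V -> R) (E1 E2 : {set {set V}}) :
  E1 \subset E2 -> wt f E2 = wt f E1 + wt f (E2 :\: E1).
Proof. by move=> sE; rewrite /wt (big_setID E1) /= (setIidPr sE). Qed.

Lemma wtU (f : V -> V -> R) (E1 E2 : {set {set V}}) : [disjoint E1 & E2] ->
  wt f (E1 :|: E2) = wt f E1 + wt f E2.
Proof.
move=> dE; rewrite /wt -bigU //; apply: eq_bigl => e; by rewrite !inE.
Qed.

Variable W : finType.
Lemma ewt_lin (lam : W -> R) (s : W -> V -> V -> R) e :
  ewt (fun x y => \sum_v lam v * s v x y) e = \sum_v lam v * ewt (s v) e.
Proof.
rewrite /ewt.
under eq_bigr => x _ do rewrite exchange_big /=.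
rewrite exchange_big /= mulr_suml; apply: eq_bigr => v _.
rewrite mulrA; congr (_ / 2); rewrite mulr_sumr; apply: eq_bigr => x _.
by rewrite mulr_sumr.
Qed.

Lemma wt_lin (lam : W -> R) (s : W -> V -> V -> R) (E : {set {set V}}) :
  wt (fun x y => \sum_v lam v * s v x y) E = \sum_v lam v * wt (s v) E.
Proof.
rewrite /wt; under eq_bigr => e _ do rewrite ewt_lin.
by rewrite exchange_big; apply: eq_bigr => v _; rewrite mulr_sumr.
Qed.

End Gen.

Section Gen2.
Variable R : realFieldType.
Variable V : finType.

Lemma wt_cut_lb (W : finType) (lam : W -> R) (s : W -> V -> V -> bool)
    (Vp : pred W) (E : {set {set V}}) :
  (forall v, 0 <= lam v) -> (forall v x y, s v x y = s v y x) ->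
  (forall v, Vp v -> lam v = 0 \/
     exists x y, [/\ x != y, [set x; y] \in E & s v x y]) ->
  \sum_(v | Vp v) lam v <= wt (fun x y => \sum_v lam v * (s v x y)%:R) E.
Proof.
move=> l0 ssym H; rewrite wt_lin big_mkcond /=; apply: ler_sum => v _.
have w0 : 0 <= wt (fun x y => (s v x y)%:R : R) E by apply: wt_ge0 => *; exact: ler0n.
case: ifP => Vv; last by rewrite mulr_ge0.
case: (H v Vv) => [->|[x [y [xy xyE sv]]]]; first by rewrite mul0r.
have e1 : wt (fun x y => (s v x y)%:R : R) [set [set x; y]] = 1.
  rewrite /wt big_set1 ewt_pair // [s v y x]ssym sv /=.
  by rewrite -[1 + 1]/(2%:R) divff // pnatr_eq0.
have h1 : 1 <= wt (fun x y => (s v x y)%:R : R) E.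
  rewrite -[X in X <= _]e1; apply: wt_sub => [*|]; [exact: ler0n | by rewrite sub1set].
by rewrite ler_peMr.
Qed.

Lemma conn_card (P : {set V}) (S : {set {set V}}) r : r \in P ->
  (forall y, y \in P -> connect (adj S) r y) -> (#|P| <= #|S|.+1)%N.
Proof.
move=> rP conn.
suff H : forall k, (k < #|P|)%N -> exists U : {set V}, exists S0 : {set {set V}},
    [/\ r \in U, #|U| = k.+1, S0 \subset S, #|S0| = k &
        forall e, e \in S0 -> e \subset U].
  have P0 : (0 < #|P|)%N by apply/card_gt0P; exists r.
  have hk : (#|P|.-1 < #|P|)%N by rewrite ltn_predL.
  have [U [S0 [_ _ sS cS _]]] := H (#|P|.-1) hk.
  have := subset_leq_card sS; rewrite cS; lia.
elim=> [|k IH] hk.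
  exists [set r], set0; split; rewrite ?set11 ?cards1 ?sub0set ?cards0 //.
  by move=> e; rewrite inE.
have [U [S0 [rU cU sS cS0 eU]]] := IH (ltnW hk).
have : ~~ (P \subset U).
  apply/negP => /subset_leq_card; rewrite cU; lia.
case/subsetPn => y yP yU.
have [u [v [uU vU uv uvS]]] := cut_lemma (conn y yP) rU yU.
have nS0 : [set u; v] \notin S0.
  apply/negP => /eU /subsetP /(_ v); rewrite set22 => /(_ isT).
  by rewrite (negbTE vU).
exists (v |: U), ([set u; v] |: S0); split.
- by rewrite !inE rU orbT.
- by rewrite cardsU1 vU cU.
- apply/subsetP => e; rewrite !inE => /orP[/eqP->|]; first by [].
  exact: (subsetP sS).
- by rewrite cardsU1 nS0 cS0.
- move=> e; rewrite !inE => /orP[/eqP->|/eU eU'].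
    by apply/subsetP => z /set2P[->|->]; rewrite !inE ?uU ?eqxx ?orbT.
  exact: (subset_trans eU' (subsetUr _ _)).
Qed.

Lemma acyc_crit (E : {set {set V}}) :
  (forall e, e \in E -> forall x y, e = [set x; y] ->
     exists K : {set V}, (x \in K) != (y \in K) /\
       forall a b, a != b -> [set a; b] \in E -> [set a; b] != e ->
         (a \in K) = (b \in K)) ->
  [forall e in E, forall x, forall y,
      (e == [set x; y]) ==> ~~ connect (adj (E :\ e)) x y].
Proof.
move=> H; apply/forall_inP => e eE; apply/forallP => x; apply/forallP => y.
apply/implyP => /eqP exy; have [K [sK clK]] := H e eE x y exy.
apply/negP => c.
have cl : closed (adj (E :\ e)) K.
  move=> a b /andP[ab]; rewrite !inE => /andP[ne abE]; exact: clK.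
by have := closed_connect cl c; apply/eqP.
Qed.

End Gen2.

Section Inst.
Variable R : realFieldType.
Variables n m : nat.
Variables w L ec : R.
Hypotheses (w0 : 0 < w) (L0 : 0 < L) (ec0 : 0 < ec).
Local Notation X := ('I_n.+1 * 'I_m.+2)%type.

Definition hub : X := (ord0, ord0).
Definition one : 'I_m.+2 := lift ord0 ord0.
Definition par (v : X) : X :=
  if nat_of_ord v.2 == 0%N then hub else if nat_of_ord v.2 == 1%N then (v.1, ord0) else (v.1, one).
Definition depth (v : X) : nat := ((nat_of_ord v.1 != 0%N) + minn (nat_of_ord v.2) 2)%N.
Definition anc (x : X) : seq X := [:: x; par x; par (par x)].
Definition Kc (v : X) : {set X} := [set x | v \in anc x].
Definition sep (v x y : X) : bool := (x \in Kc v) != (y \in Kc v).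
Definition lam (v : X) : R :=
  if nat_of_ord v.2 == 0%N then (if nat_of_ord v.1 == 0%N then 0 else w)
  else if nat_of_ord v.2 == 1%N then L else ec.
Definition dd (x y : X) : R := \sum_v lam v * (sep v x y)%:R.

Lemma KcE v x : (x \in Kc v) = (v \in anc x). Proof. by rewrite inE. Qed.
Lemma anc_self x : x \in anc x. Proof. exact: mem_head. Qed.

Lemma val_one : nat_of_ord one = 1%N. Proof. by []. Qed.

Lemma Xeq (a b : X) : a = b <-> (nat_of_ord a.1 = nat_of_ord b.1 /\ nat_of_ord a.2 = nat_of_ord b.2).
Proof.
split=> [->//|[h1 h2]]; case: a b h1 h2 => [a1 a2] [b1 b2] /= h1 h2.
by rewrite (ord_inj h1) (ord_inj h2).
Qed.

Lemma hubE (a : X) : a = hub <-> (nat_of_ord a.1 = 0%N /\ nat_of_ord a.2 = 0%N).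
Proof. exact: Xeq. Qed.

Lemma par_cases v :
  [\/ nat_of_ord v.2 = 0%N /\ par v = hub,
      nat_of_ord v.2 = 1%N /\ par v = (v.1, ord0) |
      (1 < nat_of_ord v.2)%N /\ par v = (v.1, one)].
Proof.
rewrite /par; case: (nat_of_ord v.2 =P 0%N) => [h|h]; first by constructor 1.
case: (nat_of_ord v.2 =P 1%N) => [h'|h']; first by constructor 2.
constructor 3; split=> //; lia.
Qed.

Lemma par_hub : par hub = hub. Proof. by []. Qed.

Lemma ppp v : par (par (par v)) = hub.
Proof.
by case: (par_cases v) => [][_ ->]; rewrite /par //= ?eqxx.
Qed.

Lemma depth_par v : v != hub -> (depth (par v) < depth v)%N.
Proof.
move=> nh; have nh' : ~ (nat_of_ord v.1 = 0%N /\ nat_of_ord v.2 = 0%N).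
  by move/hubE => e; rewrite e eqxx in nh.
rewrite /depth; case: (par_cases v) => [][h ->] /=; rewrite ?val_one /bump /=;
case e1: (nat_of_ord v.1 == 0%N) => /=; move/eqP: e1 => e1; first [lia | by case: nh'].
Qed.

Lemma depth_par_le v : (depth (par v) <= depth v)%N.
Proof.
case: (v =P hub) => [->|/eqP h]; first by rewrite par_hub.
exact: ltnW (depth_par h).
Qed.

Lemma anc_lt x y : x \in anc y -> x != y -> (depth x < depth y)%N.
Proof.
rewrite !inE => + nxy; rewrite (negbTE nxy) /=.
case: (y =P hub) => [ey|/eqP yh].
  by subst y; rewrite par_hub orbb => /eqP e; rewrite e eqxx in nxy.
have h1 := depth_par yh; have h2 := depth_par_le (par y).
by case/orP => /eqP ->; lia.
Qed.

Lemma anc_le x y : x \in anc y -> (depth x <= depth y)%N.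
Proof. by case: (x =P y) => [->//|/eqP ne] /anc_lt /(_ ne) /ltnW. Qed.

Lemma sep_sym v x y : sep v x y = sep v y x.
Proof. by rewrite /sep eq_sym. Qed.

Lemma sep_xx v x : sep v x x = false.
Proof. by rewrite /sep eqxx. Qed.

Lemma lam_ge0 v : 0 <= lam v.
Proof. rewrite /lam; do ! case: ifP => _ //; exact: ltW. Qed.

Lemma lam_hub : lam hub = 0. Proof. by []. Qed.

Lemma lam_gt0 v : v != hub -> 0 < lam v.
Proof.
move=> nh; rewrite /lam; case: ifP => [/eqP h2|] //; case: ifP => [/eqP h1|] //.
by have /hubE e : (nat_of_ord v.1 = 0%N /\ nat_of_ord v.2 = 0%N) by []; rewrite e eqxx in nh.
Qed.

Lemma sep_par u v : sep u v (par v) -> u = v \/ u = hub.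
Proof.
rewrite /sep /Kc !inE /anc ?inE ppp => H.
case: (u =P v) => [->|nuv]; first by left.
case: (u =P hub) => [->|nuh]; first by right.
exfalso; move: H; rewrite (introF eqP nuv) (introF eqP nuh) /= orbF.
by rewrite eqxx.
Qed.

Lemma v_notin_anc_par v : v != hub -> v \notin anc (par v).
Proof.
move=> nh; apply/negP => /anc_le; have := depth_par nh; lia.
Qed.

Lemma sep_v_par v : v != hub -> sep v v (par v).
Proof.
move=> nh; rewrite /sep !KcE anc_self; exact: v_notin_anc_par.
Qed.

Lemma dd_par v : v != hub -> dd v (par v) = lam v.
Proof.
move=> nh; rewrite /dd (bigD1 v) //= sep_v_par // mulr1 big1 ?addr0 // => u nuv.
case: (boolP (sep u v (par v))) => s; last by rewrite mulr0.
case: (sep_par s) => h; first by rewrite h eqxx in nuv.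
by rewrite h lam_hub mul0r.
Qed.

Lemma dd_ge0 x y : 0 <= dd x y.
Proof. by rewrite /dd sumr_ge0 // => v _; rewrite mulr_ge0 ?lam_ge0 ?ler0n. Qed.

Lemma dd_sym x y : dd x y = dd y x.
Proof. by rewrite /dd; apply: eq_bigr => v _; rewrite sep_sym. Qed.

Lemma dd_xx x : dd x x = 0.
Proof. by rewrite /dd big1 // => v _; rewrite sep_xx mulr0. Qed.

Lemma dd_tri x y z : dd x z <= dd x y + dd y z.
Proof.
rewrite /dd -big_split /=; apply: ler_sum => v _.
rewrite -mulrDr ler_wpM2l ?lam_ge0 // -natrD ler_nat /sep.
by case: (x \in Kc v); case: (y \in Kc v); case: (z \in Kc v).
Qed.

Lemma dd_ge_term u x y : lam u * (sep u x y)%:R <= dd x y.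
Proof.
rewrite /dd (bigD1 u) //= lerDl sumr_ge0 // => v _.
by rewrite mulr_ge0 ?lam_ge0 ?ler0n.
Qed.

Lemma anc_hub x : x \in anc hub -> x = hub.
Proof. by rewrite !inE !par_hub !orbb => /eqP. Qed.

Lemma dd_pos x y : x != y -> 0 < dd x y.
Proof.
move=> xy.
suff [u [nu su]] : exists u, u != hub /\ sep u x y.
  by apply: lt_le_trans (dd_ge_term u x y); rewrite su mulr1 lam_gt0.
have xx : x \in anc x by rewrite anc_self.
case: (boolP (x \in anc y)) => xay; last first.
  case: (x =P hub) => [ex|/eqP nx].
    exists y; split.
      by apply/eqP => ey; rewrite ex ey eqxx in xy.
    have nya : y \notin anc hub.
      by apply/negP => /anc_hub ey; rewrite ex ey eqxx in xy.
    by rewrite /sep !KcE anc_self ex (negbTE nya).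
  by exists x; split => //; rewrite /sep !KcE xx (negbTE xay).
case: (boolP (y \in anc x)) => yax.
  have := anc_lt xay xy; have := anc_lt yax (_ : y != x); rewrite eq_sym xy; lia.
exists y; split; last by rewrite /sep !KcE anc_self (negbTE yax).
apply/eqP => ey; move: xay; rewrite ey => /anc_hub ex.
by rewrite ex ey eqxx in xy.
Qed.

Lemma dd_metric : is_metric dd.
Proof.
split; [exact: dd_ge0 | | exact: dd_sym | exact: dd_tri].
move=> x y; split=> [h|->]; last exact: dd_xx.
apply/eqP; rewrite -[x == y]negbK; apply/negP => /dd_pos; by rewrite h ltxx.
Qed.


Lemma par_part x : par x = hub \/ (par x).1 = x.1.
Proof. by case: (par_cases x) => [][_ ->]; [left|right|right]. Qed.

Lemma anc_part u x : u \in anc x -> u = hub \/ u.1 = x.1.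
Proof.
rewrite !inE => /or3P[/eqP->|/eqP->|/eqP->]; [by right | exact: par_part |].
case: (par_part x) => [e|e]; first by left; rewrite e.
by case: (par_part (par x)) => [e2|e2]; [left | right; rewrite e2 e].
Qed.

Lemma gate_anc x : (x.1, ord0) \in anc x.
Proof.
case: (par_cases x) => [][h e].
- have -> : (x.1, ord0) = x by apply/Xeq; split => //=.
  exact: anc_self.
- by rewrite !inE e eqxx orbT.
- by rewrite !inE e /par /= eqxx !orbT.
Qed.

Lemma one_anc x : nat_of_ord x.2 != 0%N -> (x.1, one) \in anc x.
Proof.
case: (par_cases x) => [][h e]; first by rewrite h.
- move=> _; have -> : (x.1, one) = x by apply/Xeq; split => //=.
  exact: anc_self.
- by move=> _; rewrite !inE e eqxx orbT.
Qed.

Lemma par_same v : nat_of_ord v.2 != 0%N -> (par v).1 = v.1.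
Proof. by case: (par_cases v) => [][h ->] //; rewrite h. Qed.

Definition te (v : X) : {set X} := [set v; par v].

Lemma par_neq v : v != hub -> v != par v.
Proof.
move=> nh; apply/eqP => e; have := depth_par nh; rewrite -e; lia.
Qed.

Lemma te_inj : {in [set v | v != hub] &, injective te}.
Proof.
move=> u v; rewrite !inE => nu nv /set2_inj [[//]|[e1 e2]].
have := depth_par nu; have := depth_par nv; rewrite -e1 e2; lia.
Qed.

Lemma te_cross v a b : v != hub -> [set a; b] = te v -> sep v a b.
Proof.
move=> nv /set2_inj [[-> ->]|[-> ->]]; first exact: sep_v_par.
by rewrite sep_sym; exact: sep_v_par.
Qed.

Lemma te_nocross u v a b : u != hub -> v != hub -> u != v ->
  [set a; b] = te u -> (a \in Kc v) = (b \in Kc v).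
Proof.
move=> nu nv uv e; apply/eqP; rewrite -[_ == _]negbK; apply/negP => s.
have s' : sep v u (par u).
  by case: (set2_inj e) => [][ea eb]; move: s; rewrite ea eb // -/(sep v _ _) sep_sym.
case: (sep_par s') => h; first by rewrite h eqxx in uv.
by rewrite h eqxx in nv.
Qed.

Definition TE : {set {set X}} := [set te v | v in [set v : X | v != hub]].
Definition Et : {set {set X}} := [set te v | v in [set v : X | nat_of_ord v.2 != 0%N]].

Lemma nz_nhub v : nat_of_ord v.2 != 0%N -> v != hub.
Proof. by move=> h; apply/eqP => /hubE [_ e]; rewrite e in h. Qed.

Lemma Et_sub : Et \subset TE.
Proof.
apply: imsetS; apply/subsetP => v; rewrite !inE; exact: nz_nhub.
Qed.

Lemma TE_acyc (E : {set {set X}}) : E \subset TE ->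
  [forall e in E, forall x, forall y,
      (e == [set x; y]) ==> ~~ connect (adj (E :\ e)) x y].
Proof.
move=> sE; apply: acyc_crit => e eE x y exy.
have /imsetP [v] := subsetP sE e eE; rewrite inE => nv ev.
exists (Kc v); split; first by apply: te_cross => //; rewrite -exy.
move=> a b ab /(subsetP sE) /imsetP [u]; rewrite inE => nu eu ne.
apply: (te_nocross nu nv _ eu); apply/eqP => uv; move: ne.
by rewrite eu uv -ev eqxx.
Qed.

Lemma TE_card e : e \in TE -> #|e| == 2%N.
Proof.
by case/imsetP => v; rewrite inE => nv ->; rewrite cards2 par_neq.
Qed.

Lemma conn_par (E : {set {set X}}) x : (x != hub -> te x \in E) ->
  connect (adj E) x (par x).
Proof.
case: (x =P hub) => [->|/eqP nx] h; first by rewrite par_hub connect0.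
by apply: connect1; rewrite /adj par_neq //= h.
Qed.

Lemma conn_sym (E : {set {set X}}) x y :
  connect (adj E) x y = connect (adj E) y x.
Proof. exact: (sym_connect_sym (@adj_sym _ E)). Qed.

Lemma conn_hub x : connect (adj TE) x hub.
Proof.
have h z : connect (adj TE) z (par z).
  by apply: conn_par => nz; apply/imsetP; exists z; rewrite ?inE.
rewrite -(ppp x); apply: connect_trans (h x) _; apply: connect_trans (h _) _.
exact: h.
Qed.

Lemma TE_span : spanning_tree setT TE.
Proof.
apply/and3P; split.
- by apply/forall_inP => e eE; rewrite TE_card // subsetT.
- apply/forall_inP => x _; apply/forall_inP => y _.
  by apply: connect_trans (conn_hub x) _; rewrite conn_sym conn_hub.
- exact: TE_acyc.
Qed.

Definition part (i : 'I_n.+1) : {set X} := [set x : X | x.1 == i].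
Definition gate (i : 'I_n.+1) : X := (i, ord0).

Lemma te_in_Ei x : nat_of_ord x.2 != 0%N ->
  te x \in [set e in Et | e \subset part x.1].
Proof.
move=> h; rewrite inE; apply/andP; split.
  by apply/imsetP; exists x; rewrite ?inE.
apply/subsetP => z /set2P [->|->]; rewrite inE ?par_same //.
Qed.

Lemma conn_gate x :
  connect (adj [set e in Et | e \subset part x.1]) x (gate x.1).
Proof.
case: (par_cases x) => [][h e].
- by have -> : gate x.1 = x by apply/Xeq; split => //=.
- by rewrite /gate -e; apply: conn_par => _; apply: te_in_Ei; rewrite h.
- have c1 : connect (adj [set e in Et | e \subset part x.1]) x (x.1, one).
    by rewrite -e; apply: conn_par => _; apply: te_in_Ei; apply/eqP => h0; rewrite h0 in h.
  apply: connect_trans c1 _.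
  have -> : gate x.1 = par (x.1, one) by [].
  by apply: conn_par => _; exact: (@te_in_Ei (x.1, one)).
Qed.

Lemma part_span i : spanning_tree (part i) [set e in Et | e \subset part i].
Proof.
apply/and3P; split.
- apply/forall_inP => e; rewrite inE => /andP [eE ->].
  by rewrite (TE_card (subsetP Et_sub e eE)).
- apply/forall_inP => x; rewrite inE => /eqP xi; apply/forall_inP => y.
  rewrite inE => /eqP yi.
  have := conn_gate x; have := conn_gate y; rewrite xi yi => cy cx.
  by apply: connect_trans cx _; rewrite conn_sym.
- apply: TE_acyc; apply: subset_trans Et_sub.
  by apply/subsetP => e; rewrite inE => /andP[].
Qed.

Definition Pp : {set {set X}} := [set part i | i : 'I_n.+1].

Lemma part_inj : injective part.
Proof.
move=> i j e; have : gate i \in part j by rewrite -e inE.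
by rewrite inE => /eqP.
Qed.

Lemma in_part x i : (x \in part i) = (x.1 == i).
Proof. by rewrite inE. Qed.

Lemma Pp_partition : partition Pp [set: X].
Proof.
apply/and3P; split.
- apply/eqP/setP => x; rewrite inE; apply/bigcupP.
  by exists (part x.1); [apply/imsetP; exists x.1 | rewrite in_part].
- apply/trivIsetP => A B /imsetP [i _ ->] /imsetP [j _ ->] ne.
  rewrite -setI_eq0; apply/eqP/setP => x; rewrite !inE.
  apply/negP => /andP [/eqP xi /eqP xj]; by rewrite -xi -xj eqxx in ne.
- apply/negP => /imsetP [i _ e].
  have : gate i \in part i by rewrite in_part.
  by rewrite -e inE.
Qed.

Lemma card_Pp : #|Pp| = n.+1.
Proof. by rewrite card_imset ?card_ord //; exact: part_inj. Qed.

Lemma Et_inpart e : e \in Et -> exists2 B, B \in Pp & e \subset B.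
Proof.
case/imsetP => v; rewrite inE => h ->; exists (part v.1).
  by apply/imsetP; exists v.1.
by have := te_in_Ei h; rewrite inE => /andP[].
Qed.

Lemma forest : initial_forest Pp Et.
Proof.
split; [exact: Pp_partition | | exact: Et_inpart].
by move=> B /imsetP [i _ ->]; exact: part_span.
Qed.

Lemma ewt_te v : v != hub -> ewt dd (te v) = lam v.
Proof.
move=> nv; rewrite /te ewt_pair ?par_neq // [dd (par v) v]dd_sym dd_par //.
by lra.
Qed.

Lemma wt_TE : wt dd TE = \sum_v lam v.
Proof.
rewrite /wt /TE big_imset; last exact: te_inj.
rewrite [RHS](bigD1 hub) //= lam_hub add0r.
rewrite (eq_bigr (fun v => lam v)); last by move=> v; rewrite inE => /ewt_te.
by apply: eq_bigl => v; rewrite inE.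
Qed.

Lemma wt_Et : wt dd Et = \sum_(v | nat_of_ord v.2 != 0%N) lam v.
Proof.
rewrite /wt /Et big_imset; last first.
  by move=> u v; rewrite !inE => /nz_nhub hu /nz_nhub hv; apply: te_inj; rewrite inE.
rewrite (eq_bigr (fun v => lam v)); last by move=> v; rewrite inE => /nz_nhub /ewt_te.
by apply: eq_bigl => v; rewrite inE.
Qed.

Lemma cut_hub (T' : {set {set X}}) v : spanning_tree setT T' -> v != hub ->
  exists a b, [/\ a != b, [set a; b] \in T', a \in Kc v & b \notin Kc v].
Proof.
case/and3P => _ /forall_inP /(_ v (in_setT v)) /forall_inP /(_ hub (in_setT hub)) c _ nv.
have vK : v \in Kc v by rewrite KcE anc_self.
have hK : hub \notin Kc v by rewrite KcE; apply/negP => /anc_hub e; rewrite e eqxx in nv.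
by have [a [b [? ? ? ?]]] := cut_lemma c vK hK; exists a, b.
Qed.

Lemma TE_lb (T' : {set {set X}}) : spanning_tree setT T' ->
  \sum_v lam v <= wt dd T'.
Proof.
move=> sT; apply: (@wt_cut_lb _ _ _ lam sep predT) => //; first exact: lam_ge0.
  exact: sep_sym.
move=> v _; case: (v =P hub) => [->|/eqP nv]; first by left.
right; have [a [b [ab abT aK bK]]] := cut_hub sT nv.
by exists a, b; split => //; rewrite /sep aK (negbTE bK).
Qed.

Lemma TE_mst : is_mst dd TE.
Proof.
rewrite /is_mst TE_span /=; apply/forallP => T'; apply/implyP => sT.
by rewrite wt_TE; exact: TE_lb.
Qed.

Lemma tpart_bound (T' : {set {set X}}) : spanning_tree setT T' ->
  wt dd T' <= \sum_v lam v -> wt dd (Tpart Pp T') <= wt dd Et.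
Proof.
move=> sT le1.
have sub : Tpart Pp T' \subset T' by apply/subsetP => e; rewrite inE => /andP[].
have e1 := wt_split dd sub.
have le2 : \sum_(v | nat_of_ord v.2 == 0%N) lam v <= wt dd (T' :\: Tpart Pp T').
  apply: (@wt_cut_lb _ _ _ lam sep) => //; first exact: lam_ge0.
    exact: sep_sym.
  move=> v /eqP v20; case: (v =P hub) => [->|/eqP nv]; first by left.
  right; have [a [b [ab abT aK bK]]] := cut_hub sT nv.
  exists a, b; split => //; last by rewrite /sep aK (negbTE bK).
  rewrite !inE abT andbT; apply/negP => /existsP [B /andP [/imsetP [k _ ->]]].
  move=> /subsetP sB.
  have /eqP ak : a.1 == k by rewrite -in_part sB // set21.
  have /eqP bk : b.1 == k by rewrite -in_part sB // set22.
  move: aK; rewrite KcE => /anc_part [e|e]; first by rewrite e eqxx in nv.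
  have ve : v = gate b.1 by apply/Xeq; rewrite /= e ak bk v20.
  by move: bK; rewrite KcE ve gate_anc.
have e2 : \sum_v lam v = \sum_(v | nat_of_ord v.2 == 0%N) lam v +
    \sum_(v | nat_of_ord v.2 != 0%N) lam v.
  by rewrite (bigID (fun v : X => nat_of_ord v.2 == 0%N)).
rewrite wt_Et; move: le1 le2 e1 e2; set A := \sum_(v | _) _; set B := \sum_(v | _) _.
set C := \sum_(v | _) _; move=> h1 h2 h3 h4; lra.
Qed.

Lemma gammaE : gamma dd Pp Et = 1.
Proof.
rewrite /gamma.
have Etpos : 0 < wt dd Et.
  rewrite wt_Et (bigD1 (ord0, one)) //=.
  have h1 : 0 < lam (ord0, one) by apply: lam_gt0.
  have h2 : 0 <= \sum_(i | (nat_of_ord i.2 != 0%N) && (i != (ord0, one))) lam i.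
    by apply: sumr_ge0 => v _; exact: lam_ge0.
  lra.
suff -> : \big[Num.max/0]_(T | is_mst dd T) wt dd (Tpart Pp T) = wt dd Et.
  by rewrite divff // gt_eqF.
apply/eqP; rewrite eq_le; apply/andP; split.
  apply: bigmax_le; first exact: ltW.
  move=> T' /andP [sT /forallP /(_ TE)]; rewrite TE_span /= wt_TE => le1.
  exact: tpart_bound.
apply: le_trans (le_bigmax_cond _ _ TE_mst).
apply: wt_sub; first exact: dd_ge0.
apply/subsetP => e eE; rewrite inE (subsetP Et_sub e eE) /=.
by have [B BP eB] := Et_inpart eE; apply/existsP; exists B; rewrite BP eB.
Qed.

Definition gl (i : 'I_n.+1) : R := lam (gate i).
Definition Rep (B : {set X}) : {set X} := [set x in B | nat_of_ord x.2 != 0%N].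
Definition hw (B C : {set X}) : R :=
  L + (if B == part ord0 then 0 else w) + (if C == part ord0 then 0 else w).

Lemma ord_neq0 k (c : 'I_k.+1) : (c != ord0) = (nat_of_ord c != 0%N).
Proof. by []. Qed.

Lemma ord_eq0 k (c : 'I_k.+1) : (c == ord0) = (nat_of_ord c == 0%N).
Proof. by []. Qed.

Lemma glE i : gl i = if i == ord0 then 0 else w.
Proof. by rewrite /gl /lam /= ord_eq0; case: (nat_of_ord i == 0%N). Qed.

Lemma gl_ge0 i : 0 <= gl i.
Proof. exact: lam_ge0. Qed.

Lemma hw_part i j : hw (part i) (part j) = L + gl i + gl j.
Proof. by rewrite /hw !glE !(inj_eq part_inj). Qed.

Lemma three_lb (f : X -> R) u1 u2 u3 : (forall u, 0 <= f u) ->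
  u1 != u2 -> u1 != u3 -> u2 != u3 -> f u1 + f u2 + f u3 <= \sum_u f u.
Proof.
move=> f0 h12 h13 h23.
rewrite (bigD1 u1) //= (bigD1 u2) /=; last by rewrite eq_sym h12.
rewrite (bigD1 u3) /=; last by rewrite eq_sym h13 eq_sym h23.
have : 0 <= \sum_(i | (i != u1) && (i != u2) && (i != u3)) f i.
  by apply: sumr_ge0.
lra.
Qed.

Lemma term_eq u a b : (u != hub -> sep u a b) -> lam u * (sep u a b)%:R = lam u.
Proof.
case: (u =P hub) => [->|/eqP nu] h; first by rewrite lam_hub mul0r.
by rewrite h // mulr1.
Qed.

Lemma not_anc_other u x : u != hub -> u.1 != x.1 -> u \notin anc x.
Proof.
move=> nu ux; apply/negP => /anc_part [e|e]; first by rewrite e eqxx in nu.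
by rewrite e eqxx in ux.
Qed.

Lemma gate_nhub i : i != ord0 -> gate i != hub.
Proof. by move=> ni; apply/eqP => /hubE [e _]; rewrite ord_neq0 e in ni. Qed.

Lemma gate_hub i : gate i != hub -> i != ord0.
Proof. by move=> h; apply/eqP => e; rewrite e in h. Qed.

Lemma one_nhub j : (j, one) != hub.
Proof. by apply/eqP => /hubE []. Qed.

Lemma dd_cross_lb a b : a.1 != b.1 -> nat_of_ord b.2 != 0%N ->
  gl a.1 + gl b.1 + L <= dd a b.
Proof.
move=> ab b2; rewrite /dd.
have h1 : lam (gate a.1) * (sep (gate a.1) a b)%:R = gl a.1.
  apply: term_eq => nh; rewrite /sep !KcE gate_anc (negbTE (not_anc_other nh _)) //.
have h2 : lam (gate b.1) * (sep (gate b.1) a b)%:R = gl b.1.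
  apply: term_eq => nh; rewrite /sep !KcE gate_anc (negbTE (not_anc_other nh _)) //.
  by rewrite /= eq_sym.
have h3 : lam (b.1, one) * (sep (b.1, one) a b)%:R = L.
  rewrite term_eq // => _; rewrite /sep !KcE one_anc // (negbTE (not_anc_other (one_nhub _) _)) //.
  by rewrite /= eq_sym.
rewrite -h1 -h2 -[X in _ + X <= _]h3; apply: three_lb.
- by move=> u; rewrite mulr_ge0 ?lam_ge0 ?ler0n.
- by apply/eqP; case => e; rewrite e eqxx in ab.
- by apply/eqP => /Xeq [_].
- by apply/eqP => /Xeq [_].
Qed.

Lemma dd_gate_hub i : dd (gate i) hub = gl i.
Proof.
case: (gate i =P hub) => [e|/eqP ne]; first by rewrite /gl e dd_xx lam_hub.
have -> : hub = par (gate i) by [].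
by rewrite dd_par.
Qed.

Lemma dd_cross_exact i j : i != j -> dd (gate i) (j, one) = gl i + gl j + L.
Proof.
move=> ij; apply/eqP; rewrite eq_le; apply/andP; split; last first.
  exact: (@dd_cross_lb (gate i) (j, one) ij isT).
apply: le_trans (dd_tri _ hub _) _.
apply: le_trans (lerD (lexx _) (dd_tri hub (gate j) (j, one))) _.
rewrite dd_gate_hub dd_sym dd_gate_hub [dd (gate j) _]dd_sym.
have -> : gate j = par (j, one) by [].
by rewrite dd_par ?one_nhub // addrA.
Qed.

Lemma setdist_part i j : i != j ->
  is_setdist dd (part i) (Rep (part j)) (gl i + gl j + L).
Proof.
move=> ij; split.
  exists (gate i), (j, one); split; rewrite ?dd_cross_exact //.
    by rewrite in_part.
  by rewrite !inE eqxx.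
move=> a b; rewrite in_part !inE => /eqP ai /andP [/eqP bj b2].
by rewrite -ai -bj; apply: dd_cross_lb; rewrite // ai bj.
Qed.

Lemma setdist_uniq (A B : {set X}) r r' :
  is_setdist dd A B r -> is_setdist dd A B r' -> r = r'.
Proof.
move=> [[a [b [aA bB e]]] H] [[a' [b' [aA' bB' e']]] H'].
apply/eqP; rewrite eq_le; apply/andP; split.
  by rewrite -e'; apply: H.
by rewrite -e; apply: H'.
Qed.

Lemma Rep_part i : Rep (part i) \subset part i /\ #|Rep (part i)| = m.+1.
Proof.
split; first by apply/subsetP => x; rewrite inE => /andP[].
have -> : Rep (part i) = [set (i, c) | c in [set~ (ord0 : 'I_m.+2)]].
  apply/setP => [[a c]]; rewrite !inE /=; apply/idP/imsetP.
    by case/andP => /eqP -> h; exists c; rewrite // !inE ord_neq0.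
  by case=> c'; rewrite !inE => nc [-> ->]; rewrite eqxx -ord_neq0.
rewrite card_imset ?cardsC1 ?card_ord //.
by move=> c c' [].
Qed.

Definition S0 : {set {set {set X}}} :=
  [set [set part ord0; part i] | i in [set i : 'I_n.+1 | i != ord0]].

Lemma part_in i : part i \in Pp.
Proof. by apply/imsetP; exists i. Qed.

Lemma conn_symS (E : {set {set {set X}}}) x y :
  connect (adj E) x y = connect (adj E) y x.
Proof. exact: (sym_connect_sym (@adj_sym _ E)). Qed.

Lemma S0_span : spanning_tree Pp S0.
Proof.
apply/and3P; split.
- apply/forall_inP => e /imsetP [i]; rewrite inE => ni ->.
  rewrite cards2 (inj_eq part_inj) (eq_sym ord0) ni /=.
  by apply/subsetP => B /set2P [->|->]; apply: part_in.
- have c0 i : connect (adj S0) (part i) (part ord0).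
    case: (i =P ord0) => [->|/eqP ni]; first exact: connect0.
    apply: connect1; rewrite /adj (inj_eq part_inj) ni /=.
    by apply/imsetP; exists i; rewrite ?inE // setUC.
  apply/forall_inP => B /imsetP [i _ ->]; apply/forall_inP => C /imsetP [j _ ->].
  by apply: connect_trans (c0 i) _; rewrite conn_symS.
- apply: acyc_crit => e /imsetP [i]; rewrite inE => ni -> x y exy.
  exists [set part i]; split.
    case: (set2_inj exy) => [][<- <-];
      by rewrite !inE !(inj_eq part_inj) eqxx (eq_sym ord0) (negbTE ni).
  move=> a b ab /imsetP [k]; rewrite inE => nk eab ne.
  have ki : k != i by apply/eqP => ki; move: ne; rewrite eab ki eqxx.
  rewrite !inE; case: (set2_inj eab) => [][-> ->]; rewrite !(inj_eq part_inj);
    by rewrite ?(negbTE ki) eq_sym ?(negbTE ni).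
Qed.

Definition agree (hw' : {set X} -> {set X} -> R) :=
  forall i j, i != j -> hw' (part i) (part j) = hw (part i) (part j).

Lemma ewt_hw_edge hw' i j : agree hw' -> i != j ->
  ewt hw' [set part i; part j] = L + gl i + gl j.
Proof.
move=> ag ij; rewrite ewt_pair; last by rewrite (inj_eq part_inj).
have ji : j != i by rewrite eq_sym.
by rewrite (ag i j ij) (ag j i ji) !hw_part; lra.
Qed.

Lemma edge_parts (e : {set {set X}}) : #|e| == 2%N -> e \subset Pp ->
  exists i j, i != j /\ e = [set part i; part j].
Proof.
move=> /cards2P [B [C [BC ->]]] /subsetP sP.
have /imsetP [i _ ei] := sP B (set21 _ _).
have /imsetP [j _ ej] := sP C (set22 _ _).
exists i, j; split; last by rewrite ei ej.
by apply/eqP => ij; move: BC; rewrite ei ej ij eqxx.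
Qed.

Lemma gl0 : gl ord0 = 0. Proof. by rewrite glE eqxx. Qed.
Lemma glN i : i != ord0 -> gl i = w. Proof. by rewrite glE => /negbTE ->. Qed.

Lemma edge_lb i j : i != j -> L + w <= L + gl i + gl j.
Proof.
move=> ij; have gi := gl_ge0 i; have gj := gl_ge0 j.
case: (i =P ord0) => [ei|/eqP ni]; last by rewrite (glN ni); lra.
have nj : j != ord0 by rewrite -ei eq_sym.
by rewrite (glN nj); lra.
Qed.

Lemma wt_S0 hw' : agree hw' -> wt hw' S0 = n%:R * (L + w).
Proof.
move=> ag; rewrite /wt /S0 big_imset; last first.
  move=> i j; rewrite !inE => ni nj /set2_inj [[_ /part_inj]//|[/part_inj e _]].
  by rewrite -e eqxx in nj.
rewrite (eq_bigr (fun _ => L + w)); last first.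
  by move=> i; rewrite inE => ni; rewrite ewt_hw_edge 1?eq_sym // gl0 glN //; lra.
rewrite sumr_const mulr_natl; congr (_ *+ _).
have -> : [set i : 'I_n.+1 | i != ord0] = [set~ ord0].
  by apply/setP => i; rewrite !inE.
by rewrite cardsC1 card_ord.
Qed.

Lemma S_lb hw' (S' : {set {set {set X}}}) : agree hw' -> spanning_tree Pp S' ->
  n%:R * (L + w) <= wt hw' S'.
Proof.
move=> ag /and3P [/forall_inP ed /forall_inP cn _].
have cS : (n <= #|S'|)%N.
  have := @conn_card _ Pp S' (part ord0) (part_in _).
  rewrite card_Pp => H; suff : (n.+1 <= #|S'|.+1)%N by [].
  apply: H => y yP; exact: (forall_inP (cn _ (part_in ord0))).
apply: (@le_trans _ _ (\sum_(e in S') (L + w))).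
  rewrite sumr_const mulr_natl; by apply: ler_wpMn2l cS; rewrite addr_ge0 // ltW.
apply: ler_sum => e eS; have /andP [c2 sub] := ed e eS.
have [i [j [ij ->]]] := edge_parts c2 sub.
by rewrite ewt_hw_edge //; apply: edge_lb.
Qed.

Definition pr0 (s : {set {set X}}) : {set X} :=
  [set gate (odflt ord0 [pick i | (i != ord0) && (part i \in s)]); (ord0, one)].

Lemma pr0_S0 i : i != ord0 -> pr0 [set part ord0; part i] = [set gate i; (ord0, one)].
Proof.
move=> ni; rewrite /pr0; case: pickP => [k /andP [nk /set2P [/part_inj e|/part_inj e]]|H].
- by rewrite e eqxx in nk.
- by rewrite e.
- by have := H i; rewrite ni set22.
Qed.

Lemma agree_hw : agree hw. Proof. by []. Qed.

Lemma mro_exists : multirep_output dd Pp Et Rep (Et :|: [set pr0 s | s in S0]).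
Proof.
exists hw, S0, pr0; split => //.
- move=> B C /imsetP [i _ ->] /imsetP [j _ ->] ne.
  have ij : i != j by apply/eqP => e; rewrite e eqxx in ne.
  exists (gl i + gl j + L), (gl j + gl i + L); split.
  + exact: setdist_part.
  + by apply: setdist_part; rewrite eq_sym.
  + rewrite hw_part (addrC (gl j)) minxx; lra.
- split; first exact: S0_span.
  by move=> S' sS; rewrite wt_S0 //; apply: S_lb.
- move=> s /imsetP [i]; rewrite inE => ni -> B C BC e.
  rewrite pr0_S0 //; exists (gate i), (ord0, one); split => //.
    case: (set2_inj e) => [][<- <-]; [right|left]; rewrite !inE eqxx //.
  case: (set2_inj e) => [][<- <-]; rewrite dd_cross_exact // hw_part gl0; lra.
Qed.

Lemma mro_wt F : multirep_output dd Pp Et Rep F ->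
  wt dd F = wt dd Et + n%:R * (L + w).
Proof.
case=> hw' [S' [pr' [H1 [sS' minS'] H3 ->]]].
have ag : agree hw'.
  move=> i j ij.
  have ne : part i != part j by rewrite (inj_eq part_inj).
  have [r1 [r2 [s1 s2 e]]] := H1 _ _ (part_in i) (part_in j) ne.
  rewrite e (setdist_uniq s1 (setdist_part ij)).
  rewrite (setdist_uniq s2 (setdist_part (_ : j != i))) 1?eq_sym //.
  by rewrite hw_part (addrC (gl j)) minxx; lra.
have wS : wt hw' S' = n%:R * (L + w).
  apply/eqP; rewrite eq_le; apply/andP; split; last exact: S_lb.
  by rewrite -(wt_S0 ag); apply: minS'; exact: S0_span.
have info s : s \in S' -> exists x y, [/\ pr' s = [set x; y], x.1 != y.1,
    ewt dd (pr' s) = ewt hw' s & s = [set part x.1; part y.1]].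
  move=> sS; move: sS' => /and3P [/forall_inP ed _ _].
  have /andP [c2 sub] := ed s sS.
  have [i [j [ij es]]] := edge_parts c2 sub.
  have ne : part i != part j by rewrite (inj_eq part_inj).
  have [x [y [prE cond dxy]]] := H3 s sS _ _ ne es.
  have cs : (x.1 = i /\ y.1 = j) \/ (x.1 = j /\ y.1 = i).
    case: cond => [][xP yR]; move: yR; rewrite inE => /andP [yP _];
      move: xP yP; rewrite !in_part => /eqP -> /eqP ->; [left|right]; done.
  have dxy' : dd x y = L + gl i + gl j by rewrite dxy ag // hw_part.
  have ewE : ewt hw' s = L + gl i + gl j by rewrite es ewt_hw_edge.
  case: cs => [][e1 e2]; exists x, y.
    split => //; first by rewrite e1 e2.
      rewrite prE ewt_pair ?ewE; last by apply/eqP => e; move: ij; rewrite -e1 -e2 e eqxx.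
      by rewrite [dd y x]dd_sym dxy'; lra.
    by rewrite es e1 e2.
  split => //; first by rewrite e1 e2 eq_sym.
    rewrite prE ewt_pair ?ewE; last by apply/eqP => e; move: ij; rewrite -e1 -e2 e eqxx.
    by rewrite [dd y x]dd_sym dxy'; lra.
  by rewrite es e1 e2 setUC.
have inj : {in S' &, injective pr'}.
  move=> s1 s2 h1 h2 e.
  have [x1 [y1 [p1 _ _ b1]]] := info s1 h1.
  have [x2 [y2 [p2 _ _ b2]]] := info s2 h2.
  rewrite b1 b2; move: e; rewrite p1 p2 => /set2_inj [][-> ->] //.
  by rewrite setUC.
have dj : [disjoint Et & [set pr' s | s in S']].
  rewrite -setI_eq0; apply/eqP/setP => e; rewrite !inE; apply/negP.
  case/andP => eE /imsetP [s sS es].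
  have [B /imsetP [k _ ->] /subsetP sB] := Et_inpart eE.
  have [x [y [p xy _ _]]] := info s sS.
  have /eqP xk : x.1 == k by rewrite -in_part sB // es p set21.
  have /eqP yk : y.1 == k by rewrite -in_part sB // es p set22.
  by rewrite xk yk eqxx in xy.
rewrite wtU // -wS; congr (_ + _); rewrite /wt (big_imset _ inj) /=.
apply: eq_bigr => s sS; by have [x [y [_ _ -> _]]] := info s sS.
Qed.

Lemma sum_gates : \sum_(v | nat_of_ord v.2 == 0%N) lam v = n%:R * w.
Proof.
rewrite big_mkcond /=.
have -> : \sum_v (if nat_of_ord v.2 == 0%N then lam v else 0) =
    \sum_i \sum_c (if nat_of_ord c == 0%N then lam (i, c) else 0).
  by rewrite pair_bigA; apply: eq_bigr => [[i c]].
rewrite (eq_bigr (fun i => gl i)); last first.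
  by move=> i _; rewrite big_ord_recl /= big1 ?addr0 // => c _; rewrite lift0.
rewrite big_ord_recl gl0 add0r (eq_bigr (fun _ => w)); last first.
  by move=> i _; rewrite glN // ord_neq0 lift0.
by rewrite sumr_const card_ord mulr_natl.
Qed.

Lemma sum_Et : \sum_(v | nat_of_ord v.2 != 0%N) lam v = n.+1%:R * (L + m%:R * ec).
Proof.
rewrite big_mkcond /=.
have -> : \sum_v (if nat_of_ord v.2 != 0%N then lam v else 0) =
    \sum_i \sum_c (if nat_of_ord c != 0%N then lam (i, c) else 0).
  by rewrite pair_bigA; apply: eq_bigr => [[i c]].
rewrite (eq_bigr (fun i => L + m%:R * ec)); last first.
  move=> i _; rewrite big_ord_recl /= add0r.
  rewrite (eq_bigr (fun c => lam (i, lift ord0 c))); last by [].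
  rewrite big_ord_recl; congr (_ + _).
  rewrite (eq_bigr (fun _ => ec)); last by move=> c _; by [].
  by rewrite sumr_const card_ord mulr_natl.
by rewrite sumr_const card_ord [RHS]mulr_natl.
Qed.

Lemma inst_main :
  [/\ is_metric dd, initial_forest Pp Et, gamma dd Pp Et = 1,
      (forall B, B \in Pp -> Rep B \subset B /\ #|Rep B| = m.+1) &
      [/\ mfc_opt dd Et TE, is_mst dd TE,
          exists F, multirep_output dd Pp Et Rep F &
          forall F, multirep_output dd Pp Et Rep F ->
            wt dd F = n.+1%:R * (L + m%:R * ec) + n%:R * (L + w)]]
  /\ wt dd TE = n.+1%:R * (L + m%:R * ec) + n%:R * w.
Proof.
have hEt : wt dd Et = n.+1%:R * (L + m%:R * ec) by rewrite wt_Et sum_Et.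
split; last first.
  have e2 : \sum_v lam v = \sum_(v | nat_of_ord v.2 == 0%N) lam v +
      \sum_(v | nat_of_ord v.2 != 0%N) lam v.
    by rewrite (bigID (fun v : X => nat_of_ord v.2 == 0%N)).
  by rewrite wt_TE e2 sum_gates sum_Et addrC.
split.
- exact: dd_metric.
- exact: forest.
- exact: gammaE.
- by move=> B /imsetP [i _ ->]; exact: Rep_part.
split.
- rewrite /mfc_opt TE_span Et_sub /=; apply/forallP => T'.
  by apply/implyP => /andP [sT _]; rewrite wt_TE; exact: TE_lb.
- exact: TE_mst.
- by eexists; exact: mro_exists.
- by move=> F /mro_wt ->; rewrite hEt.
Qed.

End Inst.


Unset Implicit Arguments.

Theorem theorem2 (R : realFieldType) (p l : nat) (eps : R) :
  (0 < p)%N -> (0 < l)%N -> 0 < eps -> eps < 1 ->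
  exists (X : finType) (d : X -> X -> R) (P : {set {set X}})
         (Et : {set {set X}}) (Rep : {set X} -> {set X}),
    [/\ is_metric d, initial_forest P Et, gamma d P Et = 1,
        (forall B, B \in P -> Rep B \subset B /\ #|Rep B| = l) &
        exists T : {set {set X}},
          [/\ mfc_opt d Et T, is_mst d T,
              exists F, multirep_output d P Et Rep F &
              forall F, multirep_output d P Et Rep F ->
                wt d F = ((2 + l%:R * eps - eps) * p%:R - 1)
                         / ((1 + eps * l%:R) * p%:R - eps) * wt d T]].
Proof.
case: p => [//|n] _; case: l => [//|m] _ e0 e1.
pose w : R := if n == 0%N then 1 else eps * (2 * n + 1)%:R / n%:R.
have w0 : 0 < w.
  rewrite /w; case: eqP => [_|/eqP nn]; first exact: ltr01.
  apply: divr_gt0; first by apply: mulr_gt0 => //; rewrite ltr0n addn1.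
  by rewrite ltr0n lt0n.
have L0 : 0 < 1 - eps by rewrite subr_gt0.
have [[hm hf hg hr [hmfc hmst hex hall]] hT] := inst_main n m w0 L0 e0.
exists ('I_n.+1 * 'I_m.+2)%type, (dd w (1 - eps) eps), (Pp n m), (Et n m), (@Rep n m).
split => //; exists (TE n m); split => // F hF.
rewrite (hall F hF) hT.
have hD : (1 + eps * m.+1%:R) * n.+1%:R - eps =
    n%:R + 1 + eps * (m%:R * n%:R + m%:R + n%:R).
  by rewrite -!natr1; ring.
have Dpos : 0 < (1 + eps * m.+1%:R) * n.+1%:R - eps.
  rewrite hD; apply: ltr_wpDr; first by apply: mulr_ge0; [exact: ltW | rewrite !addr_ge0 ?mulr_ge0 ?ler0n].
  by rewrite ltr_wpDl ?ler0n.
have Dn0 := lt0r_neq0 Dpos.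
move: Dn0; rewrite hD => Dn0.
have hw : w = if n == 0%N then 1 else eps * (2 * n + 1)%:R / n%:R by [].
clearbody w; rewrite hw; clear hw hm hf hg hr hmfc hmst hex hall hT hF F w0.
case: n hD Dpos Dn0 => [|n] hD Dpos Dn0 /=.
  rewrite !mul0r !addr0; rewrite -!natr1 in Dn0 *; field.
  by move: Dn0; rewrite !(mulr0, addr0, add0r).
rewrite natrD natrM; rewrite -!natr1 in Dn0 *; field.
by rewrite Dn0 andbT natr1 pnatr_eq0.
Qed.
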